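(* Let $b,c\in Z^{10}$ with $\sum_i b_i=\sum_i c_i=0$. Suppose there are distinct odd indices $i_1,i_2,i_3\in\{1,3,5,7,9\}$ such that $t\nmid B_{i_l}$ for $l=1,2,3$ and $t\mid B_i$ for the two remaining odd $i$, and distinct odd indices $j_1,j_2,j_3$ such that $t\nmid C_{j_l}$ for $l=1,2,3$ and $t\mid C_j$ for the two remaining odd $j$. Then $\mathbb{M}(b)\cong\mathbb{M}(c)$ as $B_{5,10}$-modules if and only if $\{i_1,i_2,i_3\}=\{j_1,j_2,j_3\}$.
   Context: Let $Z=\mathbb{C}[[t]]$. Let $\Gamma_{10}$ be the quiver with vertices $0,1,\dots,9$ (indices taken mod $10$) on a cycle and arrows $x_i\colon i-1\to i$, $y_i\colon i\to i-1$ for $i=1,\dots,10$. Let $B_{5,10}$ be the completed path algebra of $\Gamma_{10}$ modulo the closed ideal generated by $xy=yx$ and $x^5=y^5$ at every vertex. For $b=(b_1,\dots,b_{10})\in Z^{10}$ with $\sum_i b_i=0$, the $B_{5,10}$-module $\mathbb{M}(b)$ has $V_i=Z\oplus Z$ at every vertex, and for odd $j$: $x_j=\begin{pmatrix} t& b_j\\ 0&1\end{pmatrix}$, $y_j=\begin{pmatrix} 1&-b_j\\0&t\end{pmatrix}$; for even $j$: $x_j=\begin{pmatrix}1&b_j\\0&t\end{pmatrix}$, $y_j=\begin{pmatrix}t&-b_j\\0&1\end{pmatrix}$. An isomorphism $\mathbb{M}(b)\to\mathbb{M}(c)$ is a family of invertible $Z$-linear maps $\varphi_i\colon Z^2\to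 Z^2$ commuting with all $x_i$ and $y_i$. For odd $i$ write $B_i=b_i+b_{i+1}$ and $C_i=c_i+c_{i+1}$ (indices mod $10$). *)

(* Defs.v *)
From mathcomp Require Import all_boot all_algebra.
From mathcomp Require Import complex.
From mathcomp Require Import Rstruct.

Set Implicit Arguments.
Unset Strict Implicit.
Unset Printing Implicit Defensive.
Import GRing.Theory.
Local Open Scope ring_scope.

Definition CC : fieldType := Rdefinitions.R[i].

(* Formal power series Z = K[[t]]: a series is its coefficient sequence. *)
Definition ps (K : fieldType) := nat -> K.

Definition ps0 {K : fieldType} : ps K := fun _ => 0.
Definition ps1 {K : fieldType} : ps K := fun n => if n == 0%N then 1 else 0.
Definition ps_t {K : fieldType} : ps K := fun n => if n == 1%N then 1 else 0.
Definition ps_add {K : fieldType} (f g : ps K) : ps K := fun n => f n + g n.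
Definition ps_opp {K : fieldType} (f : ps K) : ps K := fun n => - f n.
Definition ps_mul {K : fieldType} (f g : ps K) : ps K :=
  fun n => \sum_(i < n.+1) f i * g (n - i)%N.
Definition ps_dvd {K : fieldType} (a f : ps K) : Prop := exists g, f = ps_mul a g.

(* 2x2 matrices over Z, i.e. Z-linear maps Z^2 -> Z^2 (acting on columns). *)
Definition mk2 {K : fieldType} (a b c d : ps K) : 'M[ps K]_2 :=
  \matrix_(i < 2, j < 2)
    if i == ord0 then (if j == ord0 then a else b) else (if j == ord0 then c else d).
Definition mx1 {K : fieldType} : 'M[ps K]_2 := mk2 ps1 ps0 ps0 ps1.
Definition mx_mul {K : fieldType} (A B : 'M[ps K]_2) : 'M[ps K]_2 :=
  \matrix_(i < 2, j < 2)
    ps_add (ps_mul (A i ord0) (B ord0 j)) (ps_mul (A i ord_max) (B ord_max j)).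
Definition mx_invertible {K : fieldType} (A : 'M[ps K]_2) : Prop :=
  exists B, mx_mul B A = mx1 /\ mx_mul A B = mx1.

(* The module M(b): b j for j = 1..10 are the parameters b_1..b_10.
   Arrow x_j : (j-1) -> (j mod 10), y_j : (j mod 10) -> (j-1). *)
Definition xmap {K : fieldType} (b : nat -> ps K) (j : nat) : 'M[ps K]_2 :=
  if odd j then mk2 ps_t (b j) ps0 ps1 else mk2 ps1 (b j) ps0 ps_t.
Definition ymap {K : fieldType} (b : nat -> ps K) (j : nat) : 'M[ps K]_2 :=
  if odd j then mk2 ps1 (ps_opp (b j)) ps0 ps_t
  else mk2 ps_t (ps_opp (b j)) ps0 ps1.

(* M(b) ~= M(c): a family phi_v (v = 0..9) of invertible Z-linear maps
   commuting with all x_j and y_j (j = 1..10). *)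
Definition Miso {K : fieldType} (b c : nat -> ps K) : Prop :=
  exists phi : nat -> 'M[ps K]_2,
    (forall v, (v < 10)%N -> mx_invertible (phi v)) /\
    (forall j, (1 <= j <= 10)%N ->
       mx_mul (phi (j %% 10)%N) (xmap b j) = mx_mul (xmap c j) (phi j.-1) /\
       mx_mul (phi j.-1) (ymap b j) = mx_mul (ymap c j) (phi (j %% 10)%N)).

(* B_i = b_i + b_{i+1} for odd i in {1,3,5,7,9} (no wrap-around needed) *)
Definition Bsum {K : fieldType} (b : nat -> ps K) (i : nat) : ps K :=
  ps_add (b i) (b i.+1).

Definition odd_idx : seq nat := [:: 1; 3; 5; 7; 9]%N.

Definition sum_zero {K : fieldType} (b : nat -> ps K) : Prop :=
  forall n, \sum_(1 <= k < 11) b k n = 0.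

(* Main.v *)
Require Import Defs.
From mathcomp Require Import all_boot all_algebra.
From mathcomp Require Import ring zify.
Set Implicit Arguments.
Unset Strict Implicit.
Unset Printing Implicit Defensive.
Import GRing.Theory.
Local Open Scope ring_scope.
Ltac mring := ring.
From Stdlib Require Import Ring_theory Ring FunctionalExtensionality.

Lemma psE (f g : ps CC) : (forall n, f n = g n) -> f = g.
Proof. move=> H; exact: functional_extensionality H. Qed.

Definition pi (N : nat) (f : ps CC) : {poly CC} := \poly_(j < N) f j.
Definition ag (N : nat) (f : ps CC) (p : {poly CC}) := forall i, (i < N)%N -> f i = p`_i.

Lemma ag_pi N f : ag N f (pi N f).
Proof. by move=> i Hi; rewrite coef_poly Hi. Qed.
Arguments ag_pi : clear implicits.

Lemma ag_mul N f g p q : ag N f p -> ag N g q -> ag N (ps_mul f g) (p * q).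
Proof.
move=> Hf Hg i Hi; rewrite coefM /ps_mul; apply: eq_bigr => j _.
have Hj : (j < N)%N by apply: leq_ltn_trans Hi; rewrite -ltnS.
rewrite Hf // Hg //; apply: leq_ltn_trans Hi; exact: leq_subr.
Qed.

Lemma ag_add N f g p q : ag N f p -> ag N g q -> ag N (ps_add f g) (p + q).
Proof. by move=> Hf Hg i Hi; rewrite coefD /ps_add Hf // Hg. Qed.

Lemma ag_1 N : ag N ps1 1.
Proof. by move=> i Hi; rewrite coefC /ps1. Qed.
Arguments ag_1 : clear implicits.

Lemma ps_mulA (f g h : ps CC) : ps_mul f (ps_mul g h) = ps_mul (ps_mul f g) h.
Proof.
apply: psE => n.
have H1 := ag_mul (ag_pi n.+1 f) (ag_mul (ag_pi n.+1 g) (ag_pi n.+1 h)).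
have H2 := ag_mul (ag_mul (ag_pi n.+1 f) (ag_pi n.+1 g)) (ag_pi n.+1 h).
by rewrite H1 // H2 // mulrA.
Qed.

Lemma ps_mulC (f g : ps CC) : ps_mul f g = ps_mul g f.
Proof.
apply: psE => n.
have H1 := ag_mul (ag_pi n.+1 f) (ag_pi n.+1 g).
have H2 := ag_mul (ag_pi n.+1 g) (ag_pi n.+1 f).
by rewrite H1 // H2 // mulrC.
Qed.

Lemma ps_mul1 (f : ps CC) : ps_mul ps1 f = f.
Proof.
apply: psE => n.
have H1 := ag_mul (ag_1 n.+1) (ag_pi n.+1 f).
by rewrite H1 // mul1r coef_poly ltnSn.
Qed.

Lemma ps_distr (f g h : ps CC) : ps_mul (ps_add f g) h = ps_add (ps_mul f h) (ps_mul g h).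
Proof.
apply: psE => n.
have H1 := ag_mul (ag_add (ag_pi n.+1 f) (ag_pi n.+1 g)) (ag_pi n.+1 h).
have H2 := ag_add (ag_mul (ag_pi n.+1 f) (ag_pi n.+1 h)) (ag_mul (ag_pi n.+1 g) (ag_pi n.+1 h)).
by rewrite H1 // H2 // mulrDl.
Qed.

Lemma psth : ring_theory (@ps0 CC) ps1 ps_add ps_mul (fun f g => ps_add f (ps_opp g)) ps_opp eq.
Proof.
split.
- by move=> x; apply: psE => n; rewrite /ps_add /ps0 add0r.
- by move=> x y; apply: psE => n; rewrite /ps_add addrC.
- by move=> x y z; apply: psE => n; rewrite /ps_add addrA.
- exact: ps_mul1.
- exact: ps_mulC.
- exact: ps_mulA.
- exact: ps_distr.
- by [].
- by move=> x; apply: psE => n; rewrite /ps_add /ps_opp /ps0 subrr.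
Qed.

Add Ring psR : psth.

Lemma mul0c (f g : ps CC) : ps_mul f g 0 = f 0%N * g 0%N.
Proof. by rewrite /ps_mul big_ord_recl big_ord0 addr0 subn0. Qed.

Lemma mul1c (f g : ps CC) : ps_mul f g 1 = f 0%N * g 1%N + f 1%N * g 0%N.
Proof. by rewrite /ps_mul big_ord_recr /= big_ord_recl big_ord0 /= addr0 subn0. Qed.

Lemma tmul (g : ps CC) n : ps_mul ps_t g n = if n is m.+1 then g m else 0.
Proof.
case: n => [|n]; first by rewrite /ps_mul big_ord_recl big_ord0 /ps_t /= mul0r addr0.
rewrite /ps_mul big_ord_recl big_ord_recl big1; last by move=> i _; rewrite /ps_t /= mul0r.
by rewrite /ps_t /= mul0r mul1r add0r addr0 ?subn0 ?subSS ?subn0.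
Qed.

Definition cst (x : CC) : ps CC := fun n => if n == 0%N then x else 0.
Definition shift (f : ps CC) : ps CC := fun n => f n.+1.

Lemma tshift (f : ps CC) : f 0%N = 0 -> ps_mul ps_t (shift f) = f.
Proof. by move=> H; apply: psE => -[|n]; rewrite tmul. Qed.

Lemma dvd_t (f : ps CC) : ps_dvd ps_t f <-> f 0%N = 0.
Proof.
split; first by move=> [g ->]; rewrite tmul.
by move=> H; exists (shift f); rewrite tshift.
Qed.

Lemma cst_mul x y : ps_mul (cst x) (cst y) = cst (x * y).
Proof.
apply: psE => n; rewrite /ps_mul /cst; case: n => [|n].
  by rewrite big_ord_recl big_ord0 addr0.

rewrite big1 // => -[[|i] Hi] _ /=; first by rewrite mulr0.
by rewrite mul0r.
Qed.

Lemma cst1 : cst 1 = ps1.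
Proof. by []. Qed.

Definition mk2E (A : 'M[ps CC]_2) := mk2 (A ord0 ord0) (A ord0 ord_max) (A ord_max ord0) (A ord_max ord_max).

Lemma mk2_id (A : 'M[ps CC]_2) : A = mk2E A.
Proof.
apply/matrixP => i j; rewrite /mk2E /mk2 mxE.
by case: i => [[|[|]]] //= Hi; case: j => [[|[|]]] //= Hj; congr (A _ _); apply: val_inj.
Qed.

Lemma mx_mul_mk2 (a b c d e f g h : ps CC) :
  mx_mul (mk2 a b c d) (mk2 e f g h) =
  mk2 (ps_add (ps_mul a e) (ps_mul b g)) (ps_add (ps_mul a f) (ps_mul b h))
      (ps_add (ps_mul c e) (ps_mul d g)) (ps_add (ps_mul c f) (ps_mul d h)).
Proof.
apply/matrixP => i j; rewrite /mx_mul /mk2 !mxE /=.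
by case: i => [[|[|]]] //= Hi; case: j => [[|[|]]] //= Hj.
Qed.

Lemma mk2_inj (a b c d a' b' c' d' : ps CC) :
  mk2 a b c d = mk2 a' b' c' d' -> [/\ a = a', b = b', c = c' & d = d'].
Proof.
move=> H.
have E i j := congr1 (fun M : 'M[ps CC]_2 => M i j) H.
move: (E ord0 ord0) (E ord0 ord_max) (E ord_max ord0) (E ord_max ord_max).
by rewrite /mk2 !mxE /=.
Qed.

Lemma inv_lowzero (p q r w : ps CC) : mx_invertible (mk2 p q r w) -> r 0%N = 0 ->
  p 0%N != 0 /\ w 0%N != 0.
Proof.
move=> [B [H1 H2]] Hr.
rewrite (mk2_id B) /mx1 !mx_mul_mk2 in H1 H2.
case: (mk2_inj H1) => E1 _ _ _; case: (mk2_inj H2) => _ _ _ E4.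
have := congr1 (fun f => f 0%N) E1; have := congr1 (fun f => f 0%N) E4.
rewrite /ps_add !mul0c Hr /ps1 /= !mulr0 !mul0r !add0r => F4 F1.
split; apply/eqP => Z; [move: F1 | move: F4]; rewrite Z ?mulr0 ?mul0r ?addr0 => H; have := @oner_neq0 CC; by rewrite -{1}H eqxx.
Qed.

Lemma alg_step (p1 w1 r c c' b b' p0 w0 q1 p2 w2 : CC) :
  p1 = p0 + c * r -> w0 = r * b + w1 -> p1 * b + q1 = c * w0 ->
  p2 = p1 + c' * r -> p2 * b' = q1 + c' * w1 -> w2 + r * b' = w1 ->
  (b + b') * p0 = (c + c') * w2.
Proof.
move=> E1 E2 E3 E4 E5 E6.
have Eq1 : q1 = c * w0 - p1 * b by rewrite -E3; mring.
have Z : (p1 + c' * r) * b' - (c * (r * b + w1) - p1 * b + c' * w1) = 0.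
  by rewrite -E4 -E2 -Eq1 E5 subrr.
have -> : p0 = p1 - c * r by rewrite E1; mring.
have -> : w2 = w1 - r * b' by rewrite -E6; mring.
apply/eqP; rewrite -subr_eq0; apply/eqP; rewrite -Z; mring.
Qed.

Lemma step (p0 q0 r0 w0 p1 q1 r1 w1 p2 q2 r2 w2 b1 b2 c1 c2 : ps CC) :
  mx_invertible (mk2 p0 q0 r0 w0) -> mx_invertible (mk2 p2 q2 r2 w2) ->
  mx_mul (mk2 p1 q1 r1 w1) (mk2 ps_t b1 ps0 ps1) = mx_mul (mk2 ps_t c1 ps0 ps1) (mk2 p0 q0 r0 w0) ->
  mx_mul (mk2 p2 q2 r2 w2) (mk2 ps1 b2 ps0 ps_t) = mx_mul (mk2 ps1 c2 ps0 ps_t) (mk2 p1 q1 r1 w1) ->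
  (b1 0%N + b2 0%N == 0) = (c1 0%N + c2 0%N == 0).
Proof.
move=> I0 I2 Ho He.
rewrite !mx_mul_mk2 in Ho He.
case: (mk2_inj Ho) => O11 O12 O21 O22; case: (mk2_inj He) => E11 E12 E21 E22.
have K0 (f g : ps CC) : f = g -> f 0%N = g 0%N by move=> ->.
have K1 (f g : ps CC) : f = g -> f 1%N = g 1%N by move=> ->.
move: (K1 _ _ O11) (K0 _ _ O12) (K0 _ _ O21) (K1 _ _ O21) (K0 _ _ O22).
move: (K0 _ _ E11) (K0 _ _ E12) (K0 _ _ E21) (K1 _ _ E21) (K1 _ _ E22).
rewrite /ps_add !mul0c !mul1c /ps_t /ps1 /ps0 /=.
rewrite ?mulr0 ?mul0r ?mulr1 ?mul1r ?addr0 ?add0r.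
move=> e11 e12 e21 e21' e22 o11 o12 o21 o21' o22.
rewrite -o21 -o21' mulr0 addr0 in o11.
rewrite e21 e21' mul0r add0r in e22.
have e22' : w2 0%N + r1 0%N * b2 0%N = w1 0%N by rewrite addrC.
have K := alg_step o11 (esym o22) o12 e11 e12 e22'.
have [Hp0 _] := inv_lowzero I0 (esym o21).
have [_ Hw2] := inv_lowzero I2 e21.
by rewrite -[LHS]orbF -(negbTE Hp0) -mulf_eq0 K mulf_eq0 (negbTE Hw2) orbF.
Qed.

Lemma forward (b c : nat -> ps CC) : Miso b c -> forall k, (k < 5)%N ->
  (Bsum b k.*2.+1 0%N == 0) = (Bsum c k.*2.+1 0%N == 0).
Proof.
move=> [phi [Hinv Hc]] k Hk.
have [H1 _] := Hc k.*2.+1 ltac:(lia).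
have [H2 _] := Hc k.*2.+2 ltac:(lia).
rewrite modn_small in H1; last by lia.
have I0 : mx_invertible (mk2E (phi k.*2)) by rewrite -mk2_id; apply: Hinv; lia.
have I2 : mx_invertible (mk2E (phi (k.*2.+2 %% 10)%N)) by rewrite -mk2_id; apply: Hinv; apply: ltn_pmod.
rewrite /xmap /= odd_double /= in H1 H2.
rewrite (mk2_id (phi k.*2)) (mk2_id (phi k.*2.+1)) in H1.
rewrite (mk2_id (phi k.*2.+1)) (mk2_id (phi (k.*2.+2 %% 10)%N)) in H2.
exact: (step I0 I2 H1 H2).
Qed.
Lemma sum10 (F : nat -> CC) : \sum_(1 <= k < 11) F k =
  F 1%N + (F 2%N + (F 3%N + (F 4%N + (F 5%N + (F 6%N + (F 7%N + (F 8%N + (F 9%N + (F 10%N + 0))))))))).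
Proof. by rewrite unlock. Qed.

Lemma sumB (b : nat -> ps CC) : sum_zero b ->
  ps_add (ps_add (ps_add (ps_add (Bsum b 1) (Bsum b 3)) (Bsum b 5)) (Bsum b 7)) (Bsum b 9) = ps0.
Proof.
move=> H; apply: psE => n; have := H n.
rewrite (sum10 (fun k => b k n)) /Bsum /ps_add /ps0; cbv beta => <-; mring.
Qed.

Fixpoint psum (f : nat -> CC) k := if k is k'.+1 then psum f k' + f k' else 0.
Lemma psumS f k : psum f k.+1 = psum f k + f k. Proof. by []. Qed.
Lemma psum0 f : psum f 0 = 0. Proof. by []. Qed.

Definition cond (be ga : nat -> CC) a d g k :=
  ga k * (d - g * psum be k) - be k * (a + g * psum ga k) - g * (be k * ga k) = 0.

Ltac zer f H j := try (rewrite (_ : f j = 0); last by apply/eqP; rewrite H).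

Lemma const_sol (be ga : nat -> CC) k1 k2 k3 : (k1 < k2)%N -> (k2 < k3)%N -> (k3 < 5)%N ->
  (forall k, (k < 5)%N -> (be k == 0) = ~~ [|| k == k1, k == k2 | k == k3]) ->
  (forall k, (k < 5)%N -> (ga k == 0) = ~~ [|| k == k1, k == k2 | k == k3]) ->
  be 0%N + be 1%N + be 2%N + be 3%N + be 4%N = 0 ->
  ga 0%N + ga 1%N + ga 2%N + ga 3%N + ga 4%N = 0 ->
  exists a d g, a != 0 /\ d != 0 /\ forall k, (k < 5)%N -> cond be ga a d g k.
Proof.
move=> h12 h23 h3 Hb Hc Sb Sc.
have eb : be k3 = - ((be 0%N + be 1%N + be 2%N + be 3%N + be 4%N) - be k3) by rewrite Sb sub0r opprK.
have ec : ga k3 = - ((ga 0%N + ga 1%N + ga 2%N + ga 3%N + ga 4%N) - ga k3) by rewrite Sc sub0r opprK.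
have nb1 : be k1 != 0 by rewrite Hb ?eqxx //; lia.
have nb2 : be k2 != 0 by rewrite Hb ?eqxx ?orbT //; lia.
have nb3 : be k3 != 0 by rewrite Hb ?eqxx ?orbT //; lia.
have nc1 : ga k1 != 0 by rewrite Hc ?eqxx //; lia.
have nc2 : ga k2 != 0 by rewrite Hc ?eqxx ?orbT //; lia.
have nc3 : ga k3 != 0 by rewrite Hc ?eqxx ?orbT //; lia.
exists (ga k1 * be k2 * ga k3), (be k1 * ga k2 * be k3), (be k2 * ga k1 - be k1 * ga k2).
split; first by rewrite !mulf_neq0.
split; first by rewrite !mulf_neq0.
move=> k Hk; rewrite /cond.
clear nb1 nb2 nb3 nc1 nc2 nc3 Sb Sc.
move: k1 k2 k3 k h12 h23 h3 Hk Hb Hc eb ec.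
do 4 (case=> [|[|[|[|[|?]]]]]); move=> h12 h23 h3 Hk; try (exfalso; lia).
all: move=> Hb Hc eb ec; rewrite ?psumS ?psum0 eb ec.
all: zer be Hb 0%N; zer be Hb 1%N; zer be Hb 2%N; zer be Hb 3%N; zer be Hb 4%N.
all: zer ga Hc 0%N; zer ga Hc 1%N; zer ga Hc 2%N; zer ga Hc 3%N; zer ga Hc 4%N.
all: mring.
Qed.

Section Cons.
Variables (b c : nat -> ps CC) (a d g : CC).

Definition rho := cst g.
Definition Bk k := Bsum b k.*2.+1.
Definition Ck k := Bsum c k.*2.+1.

Fixpoint Pk k := if k is k'.+1 then ps_add (Pk k') (ps_mul rho (Ck k')) else cst a.
Fixpoint Wk k := if k is k'.+1 then ps_add (Wk k') (ps_opp (ps_mul rho (Bk k'))) else cst d.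
Definition Ek k := ps_add (ps_add (ps_mul (Ck k) (Wk k)) (ps_opp (ps_mul (Bk k) (Pk k))))
                          (ps_opp (ps_mul rho (ps_mul (Bk k) (Ck k)))).
Fixpoint Qk k := if k is k'.+1 then ps_add (Qk k') (shift (Ek k')) else ps0.

Lemma PkS k : Pk k.+1 = ps_add (Pk k) (ps_mul rho (Ck k)). Proof. by []. Qed.
Lemma WkS k : Wk k.+1 = ps_add (Wk k) (ps_opp (ps_mul rho (Bk k))). Proof. by []. Qed.
Lemma QkS k : Qk k.+1 = ps_add (Qk k) (shift (Ek k)). Proof. by []. Qed.

Definition evenm k := mk2 (Pk k) (Qk k) (ps_mul ps_t rho) (Wk k).
Definition oddp k := ps_add (Pk k) (ps_mul (c k.*2.+1) rho).
Definition oddm k :=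
  mk2 (oddp k)
      (ps_add (ps_add (ps_mul ps_t (Qk k)) (ps_mul (c k.*2.+1) (Wk k))) (ps_opp (ps_mul (oddp k) (b k.*2.+1))))
      rho (ps_add (Wk k) (ps_opp (ps_mul rho (b k.*2.+1)))).

Definition phi v := if odd v then oddm v./2 else evenm v./2.

Lemma xodd k : xmap b k.*2.+1 = mk2 ps_t (b k.*2.+1) ps0 ps1.
Proof. by rewrite /xmap /= odd_double. Qed.
Lemma xeven k : xmap b k.*2.+2 = mk2 ps1 (b k.*2.+2) ps0 ps_t.
Proof. by rewrite /xmap /= odd_double. Qed.
Lemma yodd k : ymap b k.*2.+1 = mk2 ps1 (ps_opp (b k.*2.+1)) ps0 ps_t.
Proof. by rewrite /ymap /= odd_double. Qed.
Lemma yeven k : ymap b k.*2.+2 = mk2 ps_t (ps_opp (b k.*2.+2)) ps0 ps1.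
Proof. by rewrite /ymap /= odd_double. Qed.
End Cons.

Lemma odd_x b c a d g k :
  mx_mul (oddm b c a d g k) (xmap b k.*2.+1) = mx_mul (xmap c k.*2.+1) (evenm b c a d g k).
Proof.
rewrite !xodd /oddm /evenm /oddp !mx_mul_mk2; congr mk2; ring.
Qed.

Lemma odd_y b c a d g k :
  mx_mul (evenm b c a d g k) (ymap b k.*2.+1) = mx_mul (ymap c k.*2.+1) (oddm b c a d g k).
Proof.
rewrite !yodd /oddm /evenm /oddp !mx_mul_mk2; congr mk2; ring.
Qed.

Lemma tQ b c a d g k : Ek b c a d g k 0%N = 0 ->
  ps_mul ps_t (Qk b c a d g k.+1) = ps_add (ps_mul ps_t (Qk b c a d g k)) (Ek b c a d g k).
Proof.
move=> H; rewrite QkS.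
have -> : ps_mul ps_t (ps_add (Qk b c a d g k) (shift (Ek b c a d g k))) =
  ps_add (ps_mul ps_t (Qk b c a d g k)) (ps_mul ps_t (shift (Ek b c a d g k))) by ring.
by rewrite tshift.
Qed.

Lemma even_x b c a d g k : Ek b c a d g k 0%N = 0 ->
  mx_mul (evenm b c a d g k.+1) (xmap b k.*2.+2) = mx_mul (xmap c k.*2.+2) (oddm b c a d g k).
Proof.
move=> H; rewrite !xeven /oddm /evenm /oddp !mx_mul_mk2.
rewrite (ps_mulC (Qk _ _ _ _ _ _) ps_t) tQ // PkS WkS /Ek /Bk /Ck /Bsum.
congr mk2; ring.
Qed.

Lemma even_y b c a d g k : Ek b c a d g k 0%N = 0 ->
  mx_mul (oddm b c a d g k) (ymap b k.*2.+2) = mx_mul (ymap c k.*2.+2) (evenm b c a d g k.+1).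
Proof.
move=> H; rewrite !yeven /oddm /evenm /oddp !mx_mul_mk2.
rewrite tQ // PkS WkS /Ek /Bk /Ck /Bsum.
congr mk2; ring.
Qed.

Lemma inv2 (p q r w : ps CC) e : ps_add (ps_mul p w) (ps_opp (ps_mul q r)) = cst e -> e != 0 ->
  mx_invertible (mk2 p q r w).
Proof.
move=> H He.
exists (mk2 (ps_mul (cst e^-1) w) (ps_mul (cst e^-1) (ps_opp q))
            (ps_mul (cst e^-1) (ps_opp r)) (ps_mul (cst e^-1) p)).
rewrite !mx_mul_mk2 /mx1; split; congr mk2; try ring.
all: transitivity (ps_mul (cst e^-1) (ps_add (ps_mul p w) (ps_opp (ps_mul q r)))); first ring.
all: by rewrite H cst_mul mulVf.
Qed.

Lemma Qk0 b c a d g : Qk b c a d g 0 = ps0. Proof. by []. Qed.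

Lemma det_even b c a d g k : (forall j, (j < k)%N -> Ek b c a d g j 0%N = 0) ->
  ps_add (ps_mul (Pk c a g k) (Wk b d g k)) (ps_opp (ps_mul (rho g) (ps_mul ps_t (Qk b c a d g k)))) = cst (a * d).
Proof.
elim: k => [|k IH] H.
  rewrite Qk0 -cst_mul /=; ring.
rewrite tQ; last by apply: H.
rewrite PkS WkS -IH; last by move=> j Hj; apply: H; lia.
rewrite /Ek; ring.
Qed.

Lemma inv_even b c a d g k : (forall j, (j < k)%N -> Ek b c a d g j 0%N = 0) -> a * d != 0 ->
  mx_invertible (evenm b c a d g k).
Proof.
move=> H Had; apply: (inv2 _ Had); rewrite -(det_even H); ring.
Qed.

Lemma inv_odd b c a d g k : (forall j, (j < k)%N -> Ek b c a d g j 0%N = 0) -> a * d != 0 ->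
  mx_invertible (oddm b c a d g k).
Proof.
move=> H Had; apply: (inv2 _ Had); rewrite -(det_even H) /oddp; ring.
Qed.

Lemma rho0 g : rho g 0%N = g. Proof. by []. Qed.

Lemma Pk0 c a g k : Pk c a g k 0%N = a + g * psum (fun i => Ck c i 0%N) k.
Proof.
elim: k => [|k IH]; first by rewrite psum0 mulr0 addr0.
rewrite PkS psumS /ps_add mul0c IH rho0; mring.
Qed.

Lemma Wk0 b d g k : Wk b d g k 0%N = d - g * psum (fun i => Bk b i 0%N) k.
Proof.
elim: k => [|k IH]; first by rewrite psum0 mulr0 subr0.
rewrite WkS psumS /ps_add /ps_opp mul0c IH rho0; mring.
Qed.

Lemma Ek0 b c a d g k :
  cond (fun i => Bk b i 0%N) (fun i => Ck c i 0%N) a d g k -> Ek b c a d g k 0%N = 0.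
Proof.
rewrite /cond /Ek /ps_add /ps_opp !mul0c Pk0 Wk0 rho0 => <-; mring.
Qed.

Lemma even5 b c a d g :
  ps_add (ps_add (ps_add (ps_add (Bk b 0) (Bk b 1)) (Bk b 2)) (Bk b 3)) (Bk b 4) = ps0 ->
  ps_add (ps_add (ps_add (ps_add (Ck c 0) (Ck c 1)) (Ck c 2)) (Ck c 3)) (Ck c 4) = ps0 ->
  evenm b c a d g 5 = evenm b c a d g 0.
Proof.
move=> SB SC.
have eB : Bk b 4 = ps_opp (ps_add (ps_add (ps_add (ps_add (ps_add (Bk b 0) (Bk b 1)) (Bk b 2)) (Bk b 3)) (Bk b 4)) (ps_opp (Bk b 4))).
  rewrite SB; ring.
have eC : Ck c 4 = ps_opp (ps_add (ps_add (ps_add (ps_add (ps_add (Ck c 0) (Ck c 1)) (Ck c 2)) (Ck c 3)) (Ck c 4)) (ps_opp (Ck c 4))).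
  rewrite SC; ring.
have HE : ps_add (ps_add (ps_add (ps_add (Ek b c a d g 0) (Ek b c a d g 1)) (Ek b c a d g 2)) (Ek b c a d g 3)) (Ek b c a d g 4) = ps0.
  rewrite /Ek !PkS !WkS eB eC; ring.
rewrite /evenm; congr mk2.
- rewrite !PkS eC; ring.
- rewrite !QkS Qk0; apply: psE => n.
  have := congr1 (fun f => f n.+1) HE; rewrite /ps_add /ps0 /shift; cbv beta; rewrite add0r; exact.
- rewrite !WkS eB; ring.
Qed.

Lemma eq_odd k m : (k.*2.+1 == m.*2.+1) = (k == m).
Proof. by apply/eqP/eqP; lia. Qed.

Lemma odd_idxP x : x \in odd_idx -> exists k, (k < 5)%N /\ x = k.*2.+1.
Proof.
rewrite /odd_idx !inE.
case/orP => [/eqP->|]; first by exists 0%N.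
case/orP => [/eqP->|]; first by exists 1%N.
case/orP => [/eqP->|]; first by exists 2%N.
case/orP => [/eqP->|]; first by exists 3%N.
move=> /eqP->; by exists 4%N.
Qed.

Lemma odd_idx_k k : (k < 5)%N -> k.*2.+1 \in odd_idx.
Proof. by case: k => [|[|[|[|[|k]]]]] //; lia. Qed.

Lemma memB (b : nat -> ps CC) (i1 i2 i3 : nat) :
  all (fun i => i \in odd_idx) [:: i1; i2; i3] ->
  (forall l, l \in [:: i1; i2; i3] -> ~ ps_dvd ps_t (Bsum b l)) ->
  (forall i, i \in odd_idx -> i \notin [:: i1; i2; i3] -> ps_dvd ps_t (Bsum b i)) ->
  forall x, (x \in [:: i1; i2; i3]) = (x \in odd_idx) && (Bsum b x 0%N != 0).
Proof.
move=> Ha Hn Hd x; case Hx: (x \in [:: i1; i2; i3]).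
  have Ho : x \in odd_idx := allP Ha x Hx.
  rewrite Ho /=; apply/esym/eqP => Z; apply: (Hn x Hx); exact/dvd_t.
case Ho: (x \in odd_idx) => //=.
by have /dvd_t -> := Hd x Ho (negbT Hx); rewrite eqxx.
Qed.

Lemma const_sol' (be ga : nat -> CC) k1 k2 k3 : (k1 < 5)%N -> (k2 < 5)%N -> (k3 < 5)%N ->
  uniq [:: k1; k2; k3] ->
  (forall k, (k < 5)%N -> (be k == 0) = ~~ [|| k == k1, k == k2 | k == k3]) ->
  (forall k, (k < 5)%N -> (ga k == 0) = ~~ [|| k == k1, k == k2 | k == k3]) ->
  be 0%N + be 1%N + be 2%N + be 3%N + be 4%N = 0 ->
  ga 0%N + ga 1%N + ga 2%N + ga 3%N + ga 4%N = 0 ->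
  exists a d g, a != 0 /\ d != 0 /\ forall k, (k < 5)%N -> cond be ga a d g k.
Proof.
move=> h1 h2 h3 U Hb Hc Sb Sc.
have F x y z : (x < y)%N -> (y < z)%N -> (z < 5)%N ->
  (forall k, [|| k == x, k == y | k == z] = [|| k == k1, k == k2 | k == k3]) ->
  exists a d g, a != 0 /\ d != 0 /\ forall k, (k < 5)%N -> cond be ga a d g k.
  move=> hxy hyz hz E; apply: (const_sol hxy hyz hz) => //.
    by move=> k Hk; rewrite E Hb.
  by move=> k Hk; rewrite E Hc.
have C3 x y z k : [|| k == x, k == y | k == z] = [|| k == k1, k == k2 | k == k3] ->
  [|| k == x, k == y | k == z] = [|| k == k1, k == k2 | k == k3] by [].
move: U; rewrite /= !inE negb_or => /andP [/andP [n12 n13] n23].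
case: (ltngtP k1 k2) => h12; case: (ltngtP k2 k3) => h23; case: (ltngtP k1 k3) => h13;
  try (exfalso; lia).
all: first [ apply: (F k1 k2 k3); [lia|lia|lia|] | apply: (F k1 k3 k2); [lia|lia|lia|]
           | apply: (F k2 k1 k3); [lia|lia|lia|] | apply: (F k2 k3 k1); [lia|lia|lia|]
           | apply: (F k3 k1 k2); [lia|lia|lia|] | apply: (F k3 k2 k1); [lia|lia|lia|] ].
all: by move=> k; case: (k == k1); case: (k == k2); case: (k == k3).
Qed.

Lemma jcases j : (1 <= j <= 10)%N ->
  (exists k, (k < 5)%N /\ j = k.*2.+1) \/ (exists k, (k < 5)%N /\ j = k.*2.+2).
Proof.
move=> H; have E := odd_double_half j; set h := j./2 in E.
case: (boolP (odd j)) => Ho.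
  by rewrite Ho /= in E; left; exists h; split; lia.
by rewrite (negbTE Ho) /= in E; right; exists h.-1; split; lia.
Qed.

Lemma phi_odd b c a d g k : phi b c a d g k.*2.+1 = oddm b c a d g k.
Proof. by rewrite /phi /= odd_double /= uphalf_double. Qed.

Lemma phi_even b c a d g k : phi b c a d g k.*2 = evenm b c a d g k.
Proof. by rewrite /phi odd_double doubleK. Qed.

Lemma backward (b c : nat -> ps CC) (i1 i2 i3 : nat) :
  sum_zero b -> sum_zero c ->
  all (fun i => i \in odd_idx) [:: i1; i2; i3] -> uniq [:: i1; i2; i3] ->
  (forall l, l \in [:: i1; i2; i3] -> ~ ps_dvd ps_t (Bsum b l)) ->
  (forall i, i \in odd_idx -> i \notin [:: i1; i2; i3] -> ps_dvd ps_t (Bsum b i)) ->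
  (forall k, (k < 5)%N -> (Bsum c k.*2.+1 0%N == 0) = (Bsum b k.*2.+1 0%N == 0)) ->
  Miso b c.
Proof.
move=> Zb Zc Ha U Hn Hd Hbc.
have M := memB Ha Hn Hd.
move: (Ha); rewrite /= => /and4P [/odd_idxP [k1 [h1 E1]] /odd_idxP [k2 [h2 E2]] /odd_idxP [k3 [h3 E3]] _].
subst i1 i2 i3.
have U' : uniq [:: k1; k2; k3] by move: U; rewrite /= !inE !eq_odd.
have Hb' : forall k, (k < 5)%N -> (Bk b k 0%N == 0) = ~~ [|| k == k1, k == k2 | k == k3].
  move=> k Hk; have := M k.*2.+1; rewrite odd_idx_k // /= !inE !eq_odd => ->.
  by rewrite /Bk negbK.
have Hc' : forall k, (k < 5)%N -> (Ck c k 0%N == 0) = ~~ [|| k == k1, k == k2 | k == k3].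
  by move=> k Hk; rewrite /Ck Hbc // -Hb'.
have SB := sumB Zb; have SC := sumB Zc.
have Sb : Bk b 0 0%N + Bk b 1 0%N + Bk b 2 0%N + Bk b 3 0%N + Bk b 4 0%N = 0.
  by have := congr1 (fun f => f 0%N) SB.
have Sc : Ck c 0 0%N + Ck c 1 0%N + Ck c 2 0%N + Ck c 3 0%N + Ck c 4 0%N = 0.
  by have := congr1 (fun f => f 0%N) SC.
have [a [d [g [Ha0 [Hd0 Hcond]]]]] := const_sol' h1 h2 h3 U' Hb' Hc' Sb Sc.
have HE : forall k, (k < 5)%N -> Ek b c a d g k 0%N = 0 by move=> k Hk; apply: Ek0; apply: Hcond.
have Had : a * d != 0 by rewrite mulf_neq0.
exists (phi b c a d g); split.
  move=> v Hv; rewrite /phi; case: ifP => _.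
    apply: inv_odd => // j Hj; apply: HE; move: Hj Hv; rewrite gtn_half_double; lia.
  apply: inv_even => // j Hj; apply: HE; move: Hj Hv; rewrite gtn_half_double; lia.
move=> j Hj; case: (jcases Hj) => [[k [Hk ->]] | [k [Hk ->]]].
  rewrite modn_small; last by lia.
  by rewrite /= phi_odd phi_even odd_x odd_y.
have -> : phi b c a d g (k.*2.+2 %% 10)%N = evenm b c a d g k.+1.
  case: (ltnP k 4) => Hk4.
    by rewrite modn_small; [rewrite -doubleS phi_even | lia].
  have -> : k = 4%N by lia.
  by rewrite even5.
by rewrite /= phi_odd even_x ?even_y // HE.
Qed.

Theorem theorem2p3 (b c : nat -> ps CC) (i1 i2 i3 j1 j2 j3 : nat) :
  sum_zero b -> sum_zero c ->
  all (fun i => i \in odd_idx) [:: i1; i2; i3] -> uniq [:: i1; i2; i3] ->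
  (forall l, l \in [:: i1; i2; i3] -> ~ ps_dvd ps_t (Bsum b l)) ->
  (forall i, i \in odd_idx -> i \notin [:: i1; i2; i3] -> ps_dvd ps_t (Bsum b i)) ->
  all (fun j => j \in odd_idx) [:: j1; j2; j3] -> uniq [:: j1; j2; j3] ->
  (forall l, l \in [:: j1; j2; j3] -> ~ ps_dvd ps_t (Bsum c l)) ->
  (forall j, j \in odd_idx -> j \notin [:: j1; j2; j3] -> ps_dvd ps_t (Bsum c j)) ->
  (Miso b c <-> [:: i1; i2; i3] =i [:: j1; j2; j3]).
Proof.
move=> Zb Zc Ha U Hn Hd Ha' U' Hn' Hd'.
have M := memB Ha Hn Hd; have M' := memB Ha' Hn' Hd'.
split.
  move=> HM x; rewrite M M'; case Ho: (x \in odd_idx) => //=.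
  have [k [Hk ->]] := odd_idxP Ho.
  by rewrite (forward HM Hk).
move=> Heq; apply: (backward Zb Zc Ha U Hn Hd) => k Hk.
have e1 := M k.*2.+1; have e2 := M' k.*2.+1.
rewrite odd_idx_k // in e1; rewrite odd_idx_k // in e2.
apply: negb_inj; move: e1 e2; rewrite !andTb => e1 e2; by rewrite -e2 -Heq e1.
Qed.
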